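(* Let $M$ be a compact metric space, $C\subset M$ a subset, and $f\colon C\to M$ a surjective $1$-Lipschitz map. Then $M$ is the closure of $C$. *)

(* Defs.v *)
From Stdlib Require Import Reals List.
Open Scope R_scope.

Definition is_metric {T : Type} (d : T -> T -> R) : Prop :=
  (forall x y, 0 <= d x y) /\
  (forall x y, d x y = 0 <-> x = y) /\
  (forall x y, d x y = d y x) /\
  (forall x y z, d x z <= d x y + d y z).

Definition metric_open {T : Type} (d : T -> T -> R) (U : T -> Prop) : Prop :=
  forall x, U x -> exists e, 0 < e /\ forall y, d x y < e -> U y.

Definition metric_compact {T : Type} (d : T -> T -> R) : Prop :=
  forall (I : Type) (U : I -> T -> Prop),
    (forall i, metric_open d (U i)) ->
    (forall x, exists i, U i x) ->
    exists l : list I, forall x, exists i, In i l /\ U i x.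

Definition metric_closure {T : Type} (d : T -> T -> R) (C : T -> Prop) (x : T) : Prop :=
  forall e, 0 < e -> exists c, C c /\ d x c < e.

(* Main.v *)
Require Import Defs.
From Stdlib Require Import Reals Lra Lia Classical ClassicalEpsilon List.
Open Scope R_scope.

Lemma pigeon (M : Type) (d : M -> M -> R) (Hd : is_metric d) (e : R) :
  forall (l : list M) (s : nat -> M),
  (forall n, exists c, In c l /\ d c (s n) < e/2) ->
  exists m n, m <> n /\ d (s m) (s n) < e.
Proof.
  destruct Hd as [H0 [H1 [Hs Ht]]].
  induction l as [|c l IH]; intros s Hcov.
  - destruct (Hcov 0%nat) as [c [[] _]].
  - destruct (classic (exists n0, d c (s n0) < e/2)) as [[n0 Hn0]|Hno].
    + destruct (classic (exists k, d c (s (S n0 + k)%nat) < e/2)) as [[k Hk]|Hk].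
      * exists n0, (S n0 + k)%nat; split; [lia|].
        pose proof (Ht (s n0) c (s (S n0 + k)%nat)). rewrite (Hs (s n0) c) in H. lra.
      * destruct (IH (fun k => s (S n0 + k)%nat)) as [m [n [Hmn Hd']]].
        { intro k. destruct (Hcov (S n0 + k)%nat) as [c' [[<-|Hin] Hc']].
          - exfalso; apply Hk; eauto.
          - eauto. }
        exists (S n0 + m)%nat, (S n0 + n)%nat; split; [lia|exact Hd'].
    + apply (IH s). intro n. destruct (Hcov n) as [c' [[<-|Hin] Hc']].
      * exfalso; apply Hno; eauto.
      * eauto.
Qed.

Theorem mainTheorem12 (M : Type) (d : M -> M -> R)
  (Hd : is_metric d) (Hc : metric_compact d)
  (C : M -> Prop) (f : {x : M | C x} -> M)
  (Hlip : forall x y : {x : M | C x}, d (f x) (f y) <= d (proj1_sig x) (proj1_sig y))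
  (Hsurj : forall y : M, exists x : {x : M | C x}, f x = y) :
  forall x : M, metric_closure d C x.
Proof.
  intros x. apply NNPP; intro Hnc.
  assert (He : exists e, 0 < e /\ forall c, C c -> e <= d x c).
  { apply NNPP; intro H. apply Hnc; intros e he.
    apply NNPP; intro H2. apply H; exists e; split; auto.
    intros c Cc. apply Rnot_lt_le; intro; apply H2; eauto. }
  destruct He as [e [he Hsep]].
  pose (g := fun y => proj1_sig (constructive_indefinite_description _ (Hsurj y))).
  assert (Hg : forall y, f (g y) = y)
    by (intro y; unfold g; exact (proj2_sig (constructive_indefinite_description _ (Hsurj y)))).
  pose (h := fun y => proj1_sig (g y)).
  assert (Hh : forall y z, d y z <= d (h y) (h z)).
  { intros y z. rewrite <- (Hg y), <- (Hg z) at 1. apply Hlip. }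
  assert (HhC : forall y, C (h y)) by (intro y; exact (proj2_sig (g y))).
  pose (s := fun n => Nat.iter n h x).
  assert (Hfar : forall m k, e <= d (s m) (s (m + S k)%nat)).
  { induction m; intro k.
    - simpl. apply Hsep. unfold s. simpl. apply HhC.
    - eapply Rle_trans; [apply (IHm k)|]. unfold s. simpl. apply Hh. }
  destruct Hd as [H0 [H1 [Hs Ht]]].
  destruct (Hc M (fun c y => d c y < e/2)) as [l Hl].
  - intros c y Hy. exists (e/2 - d c y); split; [lra|].
    intros z Hz. pose proof (Ht c y z). lra.
  - intro y. exists y. replace (d y y) with 0 by (symmetry; apply H1; auto). lra.
  - destruct (pigeon M d (conj H0 (conj H1 (conj Hs Ht))) e l s) as [m [n [Hmn Hlt]]].
    + intro n. destruct (Hl (s n)) as [c [Hin Hc']]. eauto.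
    + destruct (Nat.lt_gt_cases m n) as [Hlt2 _]. destruct (Hlt2 Hmn) as [Hlt3|Hgt3].
      * replace n with (m + S (n - m - 1))%nat in Hlt by lia.
        pose proof (Hfar m (n - m - 1)%nat). lra.
      * replace m with (n + S (m - n - 1))%nat in Hlt by lia.
        pose proof (Hfar n (m - n - 1)%nat). rewrite Hs in Hlt. lra.
Qed.
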